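(* For every $n\ge1$, the number of permutations $\pi$ of $\{1,\dots,n\}$ whose Schröder insertion tableau $P(\pi)$ consists of a single row is $2^{\lfloor n/2\rfloor}$.
   Context: A Schröder tableau consists of rows $1,2,\dots$; row $r$ has $\lambda_r$ cells at positions $1,\dots,\lambda_r$, each filled with a number. Cells at odd positions are upper triangles, cells at even positions are lower triangles. The Schröder insertion tableau $P(\pi)$ of $\pi=\pi_1\cdots\pi_n$ is built as follows. Start with $P$ having one row containing $\pi_1$. For $k=2,\dots,n$, insert $\alpha=\pi_k$ into row $i=1$ by the rule: if row $i$ is empty or $\alpha$ is larger than all its entries, place $\alpha$ in a new cell at the end of row $i$ and stop. Otherwise let $j$ be the position in row $i$ of the smallest entry larger than $\alpha$. If $j$ is even: remove the entry $\beta$ at position $j$, write $\alpha$ there, and insert $\beta$ into row $i+1$ by the same rule. If $j$ is odd and position $j+1$ exists in row $i$ with entry $\beta$: move the entry of position $j$ to position $j+1$, write $\alpha$ at position $j$, and insert $\beta$ into row $i+1$. If $j$ is odd and is the last position of row $i$: move the entry of position $j$ into a new cell at position $j+1$ at the end of row $i$, write $\alpha$ at position $j$, and stop. The final $P$ is $P(\pi)$. *)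

(* Defs.v *)
From mathcomp Require Import all_boot all_order all_fingroup.
Set Implicit Arguments. Unset Strict Implicit. Unset Printing Implicit Defensive.

(* A Schroder tableau: a list of rows; a row is a list of entries, and the
   entry stored at list index k (0-based) sits at position k+1.
   Odd positions (even 0-based index) are upper triangles, even positions
   (odd 0-based index) are lower triangles. *)

(* smallest entry of r larger than a (meaningful only if one exists) *)
Definition smallest_larger (r : seq nat) (a : nat) : nat :=
  let s := [seq x <- r | a < x] in foldr minn (head 0 s) s.

Fixpoint sch_insert (P : seq (seq nat)) (a : nat) : seq (seq nat) :=
  match P with
  | [::] => [:: [:: a]]
  | r :: P' =>
      if all (fun x => x < a) r then rcons r a :: P'
      else
        let j0 := index (smallest_larger r a) r in   (* position j = j0 + 1 *)
        if odd j0 then                               (* j even *)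
          set_nth 0 r j0 a :: sch_insert P' (nth 0 r j0)
        else if j0.+1 < size r then                  (* j odd, j+1 exists *)
          set_nth 0 (set_nth 0 r j0.+1 (nth 0 r j0)) j0 a
            :: sch_insert P' (nth 0 r j0.+1)
        else                                         (* j odd, j last *)
          set_nth 0 (rcons r (nth 0 r j0)) j0 a :: P'
  end.

Definition schroderP (w : seq nat) : seq (seq nat) :=
  match w with
  | [::] => [::]
  | x :: w' => foldl sch_insert [:: [:: x]] w'
  end.

(* The one-line word pi_1 ... pi_n of s in 'S_n, viewed as a permutation
   of {1,...,n}: pi_k = s(k-1) + 1. *)
Definition perm_word n (s : 'S_n) : seq nat := [seq (s i).+1 | i <- enum 'I_n].

(* Main.v *)
Require Import Defs.
From mathcomp Require Import all_boot all_order all_fingroup zify.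

Definition cond (r : seq nat) (a : nat) :=
  all (fun y => y < a) r || (odd (size r) && (count (fun y => a < y) r == 1)).

Lemma count_rcons (T : Type) (p : pred T) s x :
  count p (rcons s x) = count p s + p x.
Proof. by rewrite -cats1 count_cat /= addn0. Qed.

Lemma foldr_min_le d s x : x \in s -> foldr minn d s <= x.
Proof.
elim: s => [|y s IH] //=; rewrite in_cons => /orP [/eqP ->|xs].
  by rewrite geq_minl.
by rewrite geq_min IH ?orbT.
Qed.

Lemma foldr_min_mem d s : foldr minn d s \in d :: s.
Proof.
elim: s => [|y s IH] /=; first by rewrite mem_head.
rewrite /minn; case: ifP => _; first by rewrite !in_cons eqxx orbT.
move: IH; rewrite !in_cons => /orP [->|->] //; by rewrite !orbT.
Qed.

Lemma sl_spec r a : a \notin r -> ~~ all (fun y => y < a) r ->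
  [/\ smallest_larger r a \in r, a < smallest_larger r a &
      forall y, y \in r -> a < y -> smallest_larger r a <= y].
Proof.
move=> ar Hn; rewrite /smallest_larger.
set s := [seq x <- r | a < x].
have sn : s != [::].
  apply/negP => /eqP Hs; move/negP: Hn; apply; apply/allP => y yr.
  have : y \notin s by rewrite Hs.
  have : y != a by apply/negP => /eqP E; move: ar; rewrite -E yr.
  rewrite mem_filter yr andbT; lia.
have hs : head 0 s \in s by case: s sn => [|z t] //= _; rewrite mem_head.
have mem : foldr minn (head 0 s) s \in s.
  by move: (foldr_min_mem (head 0 s) s); rewrite in_cons => /orP [/eqP ->|].
move: (mem); rewrite mem_filter => /andP [am mr]; split => //.
by move=> y yr ay; apply: foldr_min_le; rewrite mem_filter ay.
Qed.

Lemma set_nth_last2 (q : seq nat) x y a :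
  set_nth 0 (q ++ [:: x; y]) (size q) a = q ++ [:: a; y].
Proof. by elim: q => [|z q IH] //=; rewrite IH. Qed.

Lemma ins_row_size1 r a : pairwise ltn r -> a \notin r ->
  size (sch_insert [:: r] a) == 1 -> cond r a.
Proof.
move=> pr ar /=; case: ifP => Hall; first by rewrite /cond Hall.
have [mr am mmin] := sl_spec r a ar (negbT Hall).
set m := smallest_larger r a in mr am mmin *.
case: ifP => Hod //; case: ifP => // Hlt _.
clearbody m.
have ir : index m r < size r by rewrite index_mem.
case/lastP: r pr ar Hall mr mmin ir Hlt Hod => [|q l] //.
rewrite pairwise_rcons => /andP [ql _] ar Hall mr mmin ir Hlt Hod.
rewrite size_rcons in ir Hlt.
have ei : index m (rcons q l) = size q by lia.
have ml : m = l.
  by move: (nth_index 0 mr); rewrite ei nth_rcons ltnn eqxx.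
have Hodd : ~~ odd (index m (rcons q l)) by rewrite Hod.
rewrite /cond size_rcons /= -ei (negbTE Hodd) /=.
have c0 : count (fun y => a < y) q = 0.
  apply/eqP; rewrite eqn0Ngt -has_count; apply/hasPn => y yq.
  apply/negP => ay; move: (mmin y); rewrite mem_rcons in_cons yq orbT => /(_ isT ay).
  move/allP: ql => /(_ y yq); rewrite ml; lia.
rewrite count_rcons c0 -ml am; apply/orP; right; done.
Qed.

Lemma ins_row_cond r a : pairwise ltn r -> r != [::] -> a \notin r -> cond r a ->
  exists r', sch_insert [:: r] a = [:: r'] /\ pairwise ltn r' /\ perm_eq r' (rcons r a).
Proof.
move=> pr rn ar /orP [Hall|/andP [Hodd Hc]].
  exists (rcons r a); split; first by rewrite /= Hall.
  by rewrite pairwise_rcons Hall pr perm_refl.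
case: (boolP (all (fun y => y < a) r)) => Hall.
  exists (rcons r a); split; first by rewrite /= Hall.
  by rewrite pairwise_rcons Hall pr perm_refl.
case/lastP: r pr rn ar Hall Hodd Hc => [|q l] // pr _ ar Hall Hodd Hc.
move: (pr); rewrite pairwise_rcons => /andP [ql pq].
have al : a < l.
  case/allPn: Hall => y yr; rewrite mem_rcons in_cons in yr.
  case/orP: yr => [/eqP ->|yq].
    have : a != l by apply/negP => /eqP E; move: ar; rewrite E mem_rcons mem_head.
    lia.
  move/allP: ql => /(_ y yq).
  have : a != y by apply/negP => /eqP E; move: ar; rewrite E mem_rcons in_cons yq orbT.
  lia.
move: Hc; rewrite count_rcons al addn1 eqSS => /eqP c0.
have qa : all (fun y => y < a) q.
  apply/allP => y yq.
  have : a != y by apply/negP => /eqP E; move: ar; rewrite E mem_rcons in_cons yq orbT.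
  have : ~~ (a < y).
    apply/negP => ay; have : has (fun y => a < y) q by apply/hasP; exists y.
    by rewrite has_count c0.
  lia.
have fq : [seq x <- q | a < x] = [::].
  by apply/eqP; rewrite -size_eq0 size_filter c0.
have sl : smallest_larger (rcons q l) a = l.
  by rewrite /smallest_larger filter_rcons fq al /= minnn.
have lq : l \notin q.
  apply/negP => lq; move/allP: ql => /(_ l lq); lia.
have il : index l (rcons q l) = size q.
  by rewrite -cats1 index_cat (negbTE lq) /= eqxx addn0.
rewrite size_rcons /= in Hodd.
exists (q ++ [:: a; l]); split.
  rewrite /= (negbTE Hall) sl il (negbTE Hodd) size_rcons ltnn.
  rewrite nth_rcons ltnn eqxx -!cats1 -catA /= set_nth_last2 //.
split.
  rewrite pairwise_cat pq /= al /= andbT.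
  apply/allrelP => x y xq; rewrite !in_cons in_nil orbF => /orP [/eqP ->|/eqP ->].
    by move/allP: qa => /(_ x xq).
  by move/allP: ql => /(_ x xq).
rewrite -!cats1 -catA perm_cat2l /=.
by rewrite (perm_catC [:: a] [:: l]).
Qed.

Lemma size_ins P a : 0 < size (sch_insert P a) /\ size P <= size (sch_insert P a).
Proof.
elim: P a => [|r P IH] a //=.
case: ifP => _ //.
case: ifP => _ /=; first by case: (IH (nth 0 r (index (smallest_larger r a) r))).
case: ifP => _ //=.
by case: (IH (nth 0 r (index (smallest_larger r a) r).+1)).
Qed.

Lemma size_foldl P w : 0 < size P -> 0 < size (foldl sch_insert P w).
Proof.
elim: w P => [|b w IH] P //= hP; apply: IH; by case: (size_ins P b).
Qed.

Definition goodw (w : seq nat) :=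
  all (fun k => cond (take k w) (nth 0 w k)) (iota 1 (size w).-1).

Lemma goodw_rcons w a : w != [::] -> goodw (rcons w a) = goodw w && cond w a.
Proof.
move=> wn; rewrite /goodw.
have [n Hn] : exists n, size w = n.+1 by case: w wn => // y w' _; exists (size w').
have -> : (size (rcons w a)).-1 = n + 1 by rewrite size_rcons Hn; lia.
rewrite Hn iotaD all_cat /= andbT add1n.
rewrite -cats1 -Hn take_size_cat // nth_cat ltnn subnn /=; congr (_ && _).
apply: eq_in_all => k; rewrite mem_iota => /andP [_ kl].
have kw : k < size w by lia.
by rewrite nth_cat kw takel_cat // ltnW.
Qed.

Lemma main_word x w : uniq (x :: w) ->
  (size (schroderP (x :: w)) == 1) = goodw (x :: w) /\
  (goodw (x :: w) -> exists r, schroderP (x :: w) = [:: r] /\ pairwise ltn r /\ perm_eq r (x :: w)).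
Proof.
elim/last_ind: w => [|v a IH] /=.
  move=> _; split => // _; exists [:: x]; split => //.
move=> U; have /andP [av uv] : (a \notin x :: v) && uniq (x :: v) by rewrite -rcons_uniq rcons_cons.
rewrite -rcons_cons.
have [IH1 IH2] := IH uv.
have E : foldl sch_insert [:: [:: x]] (rcons v a) = sch_insert (schroderP (x :: v)) a.
  by rewrite foldl_rcons.
rewrite E goodw_rcons //.
case: (boolP (goodw (x :: v))) => g; last first.
  rewrite andFb.
split => //.
  have [h1 h2] := size_ins (schroderP (x :: v)) a.
  have : size (schroderP (x :: v)) != 1 by rewrite IH1.
  have h3 : 0 < size (schroderP (x :: v)) by apply: size_foldl.
  move=> n1; apply/negbTE; lia.
rewrite andTb.
have [r [Er [pr per]]] := IH2 g.
  have ar : a \notin r by rewrite (perm_mem per).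
  have rn : r != [::] by apply/negP => /eqP E0; move: (perm_size per); rewrite E0.
  have cr : cond r a = cond (x :: v) a.
    rewrite /cond (perm_all _ per) (perm_size per).
    by move/seq.permP: per => ->.
  rewrite Er -cr.
  case: (boolP (cond r a)) => c.
    have [r' [E' [pr' pe']]] := ins_row_cond r a pr rn ar c.
    split; first by rewrite E'.
    move=> _; exists r'; split => //; split => //.
    by rewrite (perm_trans pe') // perm_rcons perm_sym perm_rcons perm_cons perm_sym.
  split => //; apply/negbTE/negP => H; by move: (ins_row_size1 r a pr ar H); rewrite (negbTE c).
Qed.

Definition G (w : seq nat) := forall i k, i < k -> k < size w ->
  nth 0 w i < nth 0 w k \/ (odd k /\ i = k.-1).

Lemma goodw_at (w : seq nat) k : goodw w -> 0 < k -> k < size w -> cond (take k w) (nth 0 w k).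
Proof.
move=> /allP g k0 ks; apply: g; rewrite mem_iota; apply/andP; split => //.
lia.
Qed.

Lemma goodw_G (w : seq nat) : uniq w -> goodw w -> G w.
Proof.
move=> u g i k ik ks.
have cK := goodw_at w k g (leq_ltn_trans (leq0n i) ik) ks.
case: (ltnP (nth 0 w i) (nth 0 w k)) => h; [by left|right].
have ne : nth 0 w i != nth 0 w k.
  by rewrite nth_uniq ?neq_ltn ?ik // (ltn_trans ik ks).
have h' : nth 0 w k < nth 0 w i by lia.
move: cK; rewrite /cond size_takel ?(ltnW ks) // => /orP [/allP Ha|/andP [ok c1]].
  have : nth 0 w i \in take k w.
    by rewrite -(nth_take 0 ik); apply: mem_nth; rewrite size_takel // ltnW.
  move/Ha; lia.
split => //.
case: (eqVneq i k.-1) => // ne2; exfalso.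
have k1 : 0 < k.-1 by lia.
have ks1 : k.-1 < size w by lia.
have c2 := goodw_at w k.-1 g k1 ks1.
move: c2; rewrite /cond size_takel ?(ltnW ks1) //.
have -> : odd k.-1 = false by lia.
rewrite orbF => /allP Ha.
have ik1 : i < k.-1 by lia.
have hi : nth 0 w i < nth 0 w k.-1.
  apply: Ha; rewrite -(nth_take 0 ik1).
  by apply: mem_nth; rewrite size_takel // ltnW.
move: c1; have -> : k = k.-1.+1 by lia.
rewrite (take_nth 0 ks1) count_rcons.
have : has (fun y => nth 0 w k.-1.+1 < y) (take k.-1 w).
  apply/hasP; exists (nth 0 w i).
    rewrite -(nth_take 0 ik1).
    by apply: mem_nth; rewrite size_takel // ltnW.
  have -> : k.-1.+1 = k by lia.
  done.
rewrite has_count.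
have -> : k.-1.+1 = k by lia.
have : nth 0 w k < nth 0 w k.-1 by lia.
move=> -> /=; lia.
Qed.

Lemma G_goodw_at (w : seq nat) (k : nat) : uniq w -> G w -> 0 < k -> k < size w ->
  cond (take k w) (nth 0 w k).
Proof.
move=> u Gw k1 ks.
rewrite /cond; case: (boolP (all _ _)) => //= Hn.
case/allPn: Hn => y /(nthP 0) [i isz <-].
rewrite size_takel ?(ltnW ks) // in isz.
rewrite nth_take // => nle.
have [lt|[ok ie]] := Gw i k isz ks; first by rewrite lt in nle.
rewrite size_takel ?(ltnW ks) // ok /=.
have ks1 : k.-1 < size w by lia.
have -> : k = k.-1.+1 by lia.
rewrite (take_nth 0 ks1) count_rcons.
have -> : count (fun y => nth 0 w k.-1.+1 < y) (take k.-1 w) = 0.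
  apply/eqP; rewrite eqn0Ngt -has_count; apply/hasPn => z /(nthP 0) [j jsz <-].
  rewrite size_takel ?(ltnW ks1) // in jsz.
  rewrite nth_take //.
  have -> : k.-1.+1 = k by lia.
  have kk : k.-1 < k by lia.
  have [lt2|[_ je]] := Gw j k (ltn_trans jsz kk) ks.
    by rewrite -leqNgt ltnW.
  exfalso; lia.
have -> : k.-1.+1 = k by lia.
have ne : nth 0 w i != nth 0 w k by rewrite nth_uniq ?neq_ltn ?isz // (ltn_trans isz ks).
move: nle ne; rewrite ie; move=> nle ne.
have -> : nth 0 w k < nth 0 w k.-1 by rewrite ltn_neqAle eq_sym ne leqNgt nle.
done.
Qed.

Lemma G_goodw (w : seq nat) : uniq w -> G w -> goodw w.
Proof.
move=> u Gw; apply/allP => k; rewrite mem_iota => /andP [k1 kl].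
apply: G_goodw_at => //; lia.
Qed.

Set Implicit Arguments. Unset Strict Implicit.

Lemma cardlt n m : m <= n -> #|[set i : 'I_n | i < m]| = m.
Proof.
move=> mn.
have winj : injective (widen_ord mn).
  by move=> a b /(congr1 val) /= /val_inj.
have -> : [set i : 'I_n | i < m] = [set widen_ord mn j | j : 'I_m].
  apply/setP => i; rewrite inE; apply/idP/imsetP.
    move=> im; exists (Ordinal im) => //; exact: val_inj.
  by case=> j _ ->; rewrite /= ltn_ord.
by rewrite card_imset // card_ord.
Qed.

Lemma cardgt n m : m < n -> #|[set i : 'I_n | m < i]| = n - m.+1.
Proof.
move=> mn; have := cardsC [set i : 'I_n | i < m.+1]; rewrite cardlt // card_ord.
have -> : ~: [set i : 'I_n | i < m.+1] = [set i : 'I_n | m < i].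
  by apply/setP => i; rewrite !inE ltnS -ltnNge.
lia.
Qed.

Lemma lowb n (s : 'S_n) m (x : 'I_n) : m <= n ->
  (forall i : 'I_n, i < m -> s i < x) -> m <= x.
Proof.
move=> mn H.
have sub : s @: [set i : 'I_n | i < m] \subset [set y : 'I_n | y < x].
  apply/subsetP => y /imsetP [i]; rewrite inE => im ->; rewrite inE; exact: H.
move: (subset_leq_card sub); rewrite card_imset; last exact: perm_inj.
by rewrite cardlt // cardlt // ltnW.
Qed.

Lemma upb n (s : 'S_n) m (x : 'I_n) :
  (forall j : 'I_n, m < j -> x < s j) -> x <= m.
Proof.
move=> H; case: (ltnP m n) => mn; last by apply: leq_trans (ltnW (ltn_ord x)) mn.
have sub : s @: [set i : 'I_n | m < i] \subset [set y : 'I_n | x < y].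
  apply/subsetP => y /imsetP [i]; rewrite inE => im ->; rewrite inE; exact: H.
move: (subset_leq_card sub); rewrite card_imset; last exact: perm_inj.
rewrite cardgt // cardgt //; have := ltn_ord x; lia.
Qed.

Definition Gp n (s : 'S_n) := forall i k : 'I_n, i < k -> s i < s k \/ (odd k /\ (i : nat) = k.-1).
Definition Bp n (s : 'S_n) := forall i : 'I_n, (s i)./2 = i./2.

Lemma Gp_Bp n (s : 'S_n) : Gp s -> Bp s.
Proof.
move=> H k.
have lo : (k./2).*2 <= s k.
  apply: (@lowb n s _ (s k)); first by have := ltn_ord k; lia.
  move=> i ik; have ik' : i < k by lia.
  by case: (H i k ik') => // -[ok ie]; exfalso; lia.
have hi : s k <= (k./2).*2.+1.
  apply: (@upb n s _ (s k)) => j kj; have kj' : k < j by lia.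
  by case: (H k j kj') => // -[ok ie]; exfalso; lia.
lia.
Qed.

Lemma Bp_Gp n (s : 'S_n) : Bp s -> Gp s.
Proof.
move=> H i k ik; have hi := H i; have hk := H k.
case: (ltnP (s i) (s k)) => h; [by left | right]; lia.
Qed.

Lemma nth_pw n (s : 'S_n) (i : 'I_n) : nth 0 (perm_word s) i = (s i).+1.
Proof. by rewrite /perm_word (nth_map i) ?size_enum_ord // nth_ord_enum. Qed.

Lemma size_pw n (s : 'S_n) : size (perm_word s) = n.
Proof. by rewrite /perm_word size_map size_enum_ord. Qed.

Lemma uniq_pw n (s : 'S_n) : uniq (perm_word s).
Proof.
rewrite /perm_word map_inj_uniq ?enum_uniq // => a b /succn_inj /val_inj; exact: perm_inj.
Qed.

Lemma G_Gp n (s : 'S_n) : G (perm_word s) <-> Gp s.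
Proof.
split.
  move=> H i k ik; have := H i k ik; rewrite size_pw !nth_pw ltnS => h.
  by case: (h (ltn_ord k)); [left | right].
move=> H i k ik; rewrite size_pw => kn.
have i_n : i < n by lia.
have := H (Ordinal i_n) (Ordinal kn) ik.
rewrite -[i]/(val (Ordinal i_n)) -[k]/(val (Ordinal kn)) !nth_pw /=.
by case=> h; [left | right].
Qed.

Lemma single_row_Bp n (s : 'S_n) : 0 < n ->
  (size (schroderP (perm_word s)) == 1) = [forall i, (s i)./2 == i./2].
Proof.
move=> n0.
have u := uniq_pw s.
case E: (perm_word s) u => [|x w] u.
  by move: (size_pw s); rewrite E => /= en; rewrite -en in n0.
have [-> _] := main_word x w u.
apply/idP/forallP.
  move=> g i; apply/eqP; apply: Gp_Bp i; apply/G_Gp; rewrite E.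
  exact: goodw_G.
move=> B; apply: G_goodw => //; rewrite -E; apply/G_Gp; apply: Bp_Gp => i.
exact/eqP.
Qed.

Set Implicit Arguments. Unset Strict Implicit.

Definition partner (i : nat) := if odd i then i.-1 else i.+1.

Section Cnt.
Variable n : nat.

Definition hf (f : {ffun 'I_(n./2) -> bool}) (i : nat) : nat :=
  if [exists b : 'I_(n./2), (val b == i./2) && f b] then partner i else i.

Lemma hf_half f i : (hf f i)./2 = i./2.
Proof. rewrite /hf /partner; case: ifP => _ //; case: ifP => Ho; lia. Qed.

Lemma hf_lt f i : i < n -> hf f i < n.
Proof.
rewrite /hf /partner => lt; case: ifP => // /existsP [b /andP [/eqP e _]].
have := ltn_ord b; rewrite e => h; case: ifP => Ho; lia.
Qed.

Lemma hfK f i : hf f (hf f i) = i.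
Proof.
rewrite {1}/hf hf_half /hf; case: ifP => E; rewrite E // /partner.
case Ho: (odd i); case: ifP => H; lia.
Qed.

Definition gf f (i : 'I_n) : 'I_n := insubd i (hf f i).

Lemma val_gf f i : val (gf f i) = hf f i.
Proof. by rewrite /gf val_insubd hf_lt. Qed.

Lemma gfK f : cancel (gf f) (gf f).
Proof. by move=> i; apply: val_inj; rewrite !val_gf hfK. Qed.

Definition Pf f : 'S_n := perm (can_inj (gfK f)).

Lemma ord2_proof (b : 'I_(n./2)) : b.*2 < n.
Proof. have := ltn_ord b; lia. Qed.

Definition ord2 (b : 'I_(n./2)) : 'I_n := Ordinal (ord2_proof b).

Lemma ex_eq (f : {ffun 'I_(n./2) -> bool}) (b : 'I_(n./2)) :
  [exists b', (val b' == val b) && f b'] = f b.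
Proof.
apply/existsP/idP => [[b' /andP [/eqP e fb']]|fb]; first by rewrite -(val_inj e).
by exists b; rewrite eqxx.
Qed.

Lemma Pf_inj : injective Pf.
Proof.
move=> f1 f2 E; apply/ffunP => b.
have := congr1 (fun p : 'S_n => val (p (ord2 b))) E.
rewrite /= !permE !val_gf /hf /= doubleK !ex_eq /partner.
have -> : odd b.*2 = false by lia.
by case: (f1 b); case: (f2 b) => //= h; move: h; lia.
Qed.

Lemma imPf : [set s : 'S_n | [forall i, (s i)./2 == i./2]] = Pf @: setT.
Proof.
apply/setP => s; rewrite inE; apply/idP/imsetP.
  move/forallP => B.
  have B' : forall i, (s i)./2 = i./2 by move=> i; apply/eqP.
  exists [ffun b => (s (ord2 b) : nat) != ord2 b] => //.
  apply/permP => i; rewrite permE; apply: val_inj; rewrite val_gf /hf.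
  have inj : forall j, (val i = val j) <-> ((s i : nat) = s j).
    move=> j; split => h; first by rewrite (@val_inj _ _ _ i j h).
    by rewrite (@perm_inj _ s i j (val_inj h)).
  have hi := B' i; have il := ltn_ord i; have sil := ltn_ord (s i).
  case: (boolP [exists _, _]).
    case/existsP => b /andP [/eqP bi]; rewrite ffunE => /eqP fb.
    have hj := B' (ord2 b); move: (inj (ord2 b)) hj fb; rewrite /= /partner.
    case: (eqVneq (val i) b.*2) => [e|ne].
      case=> h1 _ hj' fb'; rewrite (h1 e) e; have -> : odd b.*2 = false by lia.
      lia.
    move=> [_ h2]; have ne' : (s i : nat) <> s (ord2 b) by move/h2; move/eqP: ne.
    have ne2 : (i : nat) <> b.*2 by apply/eqP.
    have bi' : (b : nat) = i./2 := bi.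
    move=> hj fb; case: ifP => Ho; lia.
  move/existsPn => nb.
  case: (ltnP (i./2) (n./2)) => hl; last by move: hi il sil; rewrite /=; lia.
  have := nb (Ordinal hl); rewrite ffunE /= eqxx /= negbK => /eqP fb.
  set b := Ordinal hl in fb.
  have hj := B' (ord2 b); move: (inj (ord2 b)) hj fb; rewrite /=.
  case: (eqVneq (val i) (i./2).*2) => [e|ne].
    case=> h1 _ hj' fb'; rewrite (h1 e) fb'.
    have e' : (i : nat) = (i./2).*2 := e; lia.
  move=> [_ h2]; have ne' : (s i : nat) <> s (ord2 b) by move/h2; move/eqP: ne.
  have ne2 : (i : nat) <> (i./2).*2 by apply/eqP.
  move=> hj fb; lia.
case=> f _ ->; apply/forallP => i; by rewrite permE val_gf hf_half.
Qed.

Lemma count_B : #|[set s : 'S_n | [forall i, (s i)./2 == i./2]]| = 2 ^ n./2.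
Proof.
by rewrite imPf card_imset ?cardsT ?card_ffun ?card_bool ?card_ord //; exact: Pf_inj.
Qed.

End Cnt.

Unset Implicit Arguments.

Theorem mainTheorem8 (n : nat) : 1 <= n ->
  #|[set s : 'S_n | size (schroderP (perm_word s)) == 1]| = 2 ^ (n./2).
Proof.
move=> n0.
have -> : [set s : 'S_n | size (schroderP (perm_word s)) == 1] =
          [set s : 'S_n | [forall i, (s i)./2 == i./2]].
  by apply/setP => s; rewrite !inE single_row_Bp.
exact: count_B.
Qed.
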